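(* For all $n\in\mathbb N$ the following hold in $\mathbb V$: $$\sum_{k=0}^n G_{n-k}\star W_{-k}\,q^{2k-n}=\sum_{k=0}^n W_{-k}\star G_{n-k}\,q^{n-2k}=[2]_q^n(xy+yx)^nx,$$ $$\sum_{k=0}^n G_{n-k}\star W_{k+1}\,q^{n-2k}=\sum_{k=0}^n W_{k+1}\star G_{n-k}\,q^{2k-n}=[2]_q^n\,y(xy+yx)^n,$$ $$\sum_{k=0}^n \tilde G_{n-k}\star W_{-k}\,q^{n-2k}=\sum_{k=0}^n W_{-k}\star\tilde G_{n-k}\,q^{2k-n}=[2]_q^n\,x(xy+yx)^n,$$ $$\sum_{k=0}^n \tilde G_{n-k}\star W_{k+1}\,q^{2k-n}=\sum_{k=0}^n W_{k+1}\star\tilde G_{n-k}\,q^{n-2k}=[2]_q^n(xy+yx)^ny.$$ On the right-hand sides, powers and products are taken in the free (concatenation) product.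
   Context: Let $\mathbb F$ be a field and let $q\in\mathbb F$ be nonzero and not a root of unity. Let $[m]_q=(q^m-q^{-m})/(q-q^{-1})$. Let $\mathbb V$ be the free associative $\mathbb F$-algebra on noncommuting $x,y$, with basis the words (including $1$). Juxtaposition denotes concatenation. Set $\langle x,x\rangle=\langle y,y\rangle=2$ and $\langle x,y\rangle=\langle y,x\rangle=-2$. The $q$-shuffle product $\star$ is the bilinear product determined as follows: - $1\star v=v\star 1=v$; - for nontrivial words $u=u_1\cdots u_r$ and $v=v_1\cdots v_s$, $$u\star v=u_1((u_2\cdots u_r)\star v)+v_1(u\star(v_2\cdots v_s))q^{\langle u_1,v_1\rangle+\cdots+\langle u_r,v_1\rangle}.$$ This makes $\mathbb V$ an associative algebra, the $q$-shuffle algebra. For $k\in\mathbb N$: - $W_{-k}=xyx\cdots x$ is the alternating word of length $2k+1$ beginning and ending with $x$; - $W_{k+1}=yxy\cdots y$ is the alternating word of length $2k+1$ beginning and ending with $y$; - $G_k=yxyx\cdots yx$ is the word of length $2k$; - $\tilde G_k=xyxy\cdots xy$ is the word of length $2k$; - $G_0=\tilde G_0=1$. *)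

(* Defs.v *)
From mathcomp Require Import all_boot all_algebra.
Set Implicit Arguments. Unset Strict Implicit. Unset Printing Implicit Defensive.
Import GRing.Theory.
Local Open Scope ring_scope.

(* A word is a seq bool (false = x, true = y).
   An element of V is represented by a finite formal linear combination
   (a list of (coefficient, word) pairs); two representatives denote the
   same element of V iff they have the same coefficient at every word
   (relation veq). *)

Definition word := seq bool.
Definition lx : bool := false.
Definition ly : bool := true.

Section QShuffle.
Variables (F : fieldType) (q : F).

Definition V := seq (F * word).

Definition coef (v : V) (w : word) : F :=
  \sum_(p <- v) (if p.2 == w then p.1 else 0).

Definition veq (a b : V) : Prop := forall w, coef a w = coef b w.

Definition vscale (c : F) (v : V) : V := [seq (c * p.1, p.2) | p <- v].
Definition vadd (a b : V) : V := a ++ b.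
Definition vword (w : word) : V := [:: (1, w)].

Definition vcat (a b : V) : V :=
  flatten [seq [seq (p.1 * r.1, p.2 ++ r.2) | r <- b] | p <- a].
Definition vpow (a : V) (n : nat) : V := iter n (vcat a) (vword [::]).

Definition bform (a b : bool) : int := if a == b then 2%:Z else - 2%:Z.

Fixpoint wshuffle (u : word) : word -> V :=
  match u with
  | [::] => fun v => vword v
  | a :: u' =>
      fix wsh_u (v : word) : V :=
        match v with
        | [::] => vword (a :: u')
        | b :: v' =>
            [seq (p.1, a :: p.2) | p <- wshuffle u' v] ++
            vscale (q ^ (\sum_(c <- a :: u') bform c b))
                   [seq (p.1, b :: p.2) | p <- wsh_u v']
        end
  end.

Definition star (a b : V) : V :=
  flatten [seq flatten [seq vscale (p.1 * r.1) (wshuffle p.2 r.2) | r <- b]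
          | p <- a].

Definition vsum (n : nat) (f : nat -> V) : V :=
  flatten [seq f k | k <- iota 0 n.+1].

Definition qint (m : int) : F := (q ^ m - q ^ (- m)) / (q - q^-1).

End QShuffle.

Definition Wneg (k : nat) : word := lx :: flatten (nseq k [:: ly; lx]).
(* W_{k+1} = y x y ... y (length 2k+1) *)
Definition Wpos (k : nat) : word := ly :: flatten (nseq k [:: lx; ly]).
Definition Gw (k : nat) : word := flatten (nseq k [:: ly; lx]).
Definition Gtw (k : nat) : word := flatten (nseq k [:: lx; ly]).

Definition xyyx (F : fieldType) : V F := [:: (1, [:: lx; ly]); (1, [:: ly; lx])].

(* Main.v *)
Require Import Defs.
From mathcomp Require Import all_boot all_algebra.
From mathcomp Require Import ring zify.
Import GRing.Theory.
Local Open Scope ring_scope.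

Section Aux.
Variables (F : fieldType) (q : F).
Hypothesis hq0 : q != 0.

Definition sh (u v w : word) : F := coef (wshuffle q u v) w.
Definition bsum (u : word) (c : bool) : int := \sum_(d <- u) bform d c.
Arguments sh : simpl never.
Arguments bsum : simpl never.

Lemma coef_cat (s t : V F) w : coef (s ++ t) w = coef s w + coef t w.
Proof. by rewrite /coef big_cat. Qed.

Lemma coef_scale k (s : V F) w : coef (vscale k s) w = k * coef s w.
Proof.
rewrite /coef /vscale big_map mulr_sumr; apply: eq_bigr => p _.
by case: ifP; rewrite ?mulr0.
Qed.

Lemma coef_word u w : coef (vword F u) w = (u == w)%:R.
Proof. by rewrite /coef big_cons big_nil addr0; case: ifP. Qed.

Lemma coef_mapc (f : F * word -> F) (g : F * word -> word) x (s : V F) c w :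
  coef [seq (f r, x :: g r) | r <- s] (c :: w) =
  (c == x)%:R * coef [seq (f r, g r) | r <- s] w.
Proof.
rewrite /coef !big_map mulr_sumr; apply: eq_bigr => p _ /=.
rewrite eqseq_cons eq_sym; case: (c == x); rewrite ?mul1r ?mul0r //=; case: ifP.
Qed.

Lemma coef_mapc_nil (f : F * word -> F) (g : F * word -> word) x (s : V F) :
  coef [seq (f r, x :: g r) | r <- s] [::] = 0.
Proof. by rewrite /coef big_map big1. Qed.

Lemma coef_map_id (s : V F) w : coef [seq (r.1, r.2) | r <- s] w = coef s w.
Proof. by rewrite /coef big_map; apply: eq_bigr => -[]. Qed.

Lemma coef_map_id1 (s : V F) w : coef [seq (1 * r.1, r.2) | r <- s] w = coef s w.
Proof. by rewrite /coef big_map; apply: eq_bigr => -[] a b _ /=; rewrite mul1r. Qed.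

Lemma wshuffle_cc x u y v :
  wshuffle q (x :: u) (y :: v) =
  [seq (p.1, x :: p.2) | p <- wshuffle q u (y :: v)] ++
  vscale (q ^ (bsum (x :: u) y)) [seq (p.1, y :: p.2) | p <- wshuffle q (x :: u) v].
Proof. by []. Qed.

Lemma sh_nil_l v w : sh [::] v w = (v == w)%:R.
Proof. by rewrite /sh /= coef_word. Qed.

Lemma sh_nil_r u w : sh u [::] w = (u == w)%:R.
Proof. by case: u => [|x u]; rewrite /sh /= coef_word. Qed.

Definition hp (u v : word) c w : F :=
  if u is x :: u' then (c == x)%:R * sh u' v w else 0.
Definition vp (u v : word) c w : F :=
  if v is y :: v' then (c == y)%:R * q ^ (bsum u y) * sh u v' w else 0.

Lemma shE u v c w : sh u v (c :: w) = hp u v c w + vp u v c w.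
Proof.
case: u => [|x u]; case: v => [|y v]; rewrite /hp /vp.
- by rewrite sh_nil_l add0r.
- rewrite !sh_nil_l /bsum big_nil expr0z mulr1 eqseq_cons eq_sym add0r.
  by case: (c == y); rewrite ?mul1r ?mul0r.
- rewrite !sh_nil_r eqseq_cons eq_sym addr0.
  by case: (c == x); rewrite ?mul1r ?mul0r.
- rewrite /sh wshuffle_cc coef_cat coef_scale !coef_mapc !coef_map_id.
  by rewrite mulrCA mulrA.
Qed.

Lemma sh_nilw u v : sh u v [::] = ((u == [::]) && (v == [::]))%:R.
Proof.
case: u => [|x u]; case: v => [|y v] //=; rewrite ?sh_nil_l ?sh_nil_r //.
by rewrite /sh wshuffle_cc coef_cat coef_scale !coef_mapc_nil mulr0 addr0.
Qed.

Lemma sh_size u v w : size w != (size u + size v)%N -> sh u v w = 0.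
Proof.
elim: w u v => [|c w IH] u v.
  by rewrite sh_nilw; case: u; case: v.
move=> hs; rewrite shE /hp /vp.
case: u hs => [|x u] hs; case: v hs => [|y v] hs; rewrite ?add0r ?addr0 ?mulr0 //.
all: rewrite ?IH ?mulr0 ?addr0 //.
all: move: hs => /=; rewrite ?addn0 ?addSn ?addnS ?eqSS //.
Qed.


Fixpoint ev (a : bool) (k : nat) : word :=
  if k is k'.+1 then ~~ a :: a :: ev a k' else [::].
Definition od (a : bool) (k : nat) : word := a :: ev a k.
Arguments ev : simpl never.
Arguments od : simpl never.
Arguments hp : simpl never.
Arguments vp : simpl never.

Lemma evS a k : ev a k.+1 = ~~ a :: od a k. Proof. by []. Qed.
Lemma ev0 a : ev a 0 = [::]. Proof. by []. Qed.
Lemma odE a k : od a k = a :: ev a k. Proof. by []. Qed.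

Lemma bsum_cons x u c : bsum (x :: u) c = bform x c + bsum u c.
Proof. by rewrite /bsum big_cons. Qed.
Lemma bsum_nil c : bsum [::] c = 0.
Proof. by rewrite /bsum big_nil. Qed.

Lemma bsum_ev a k c : bsum (ev a k) c = 0.
Proof.
elim: k => [|k IH]; first by rewrite ev0 bsum_nil.
rewrite evS odE !bsum_cons IH addr0 /bform.
by case: (a); case: (c).
Qed.

Lemma bsum_od a k c : bsum (od a k) c = bform a c.
Proof. by rewrite odE bsum_cons bsum_ev addr0. Qed.

Lemma bform_aa a : bform a a = 2%:Z. Proof. by rewrite /bform eqxx. Qed.
Lemma bform_an a : bform a (~~ a) = - 2%:Z. Proof. by case: a. Qed.
Lemma bform_na a : bform (~~ a) a = - 2%:Z. Proof. by case: a. Qed.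

Lemma size_ev a k : size (ev a k) = (2 * k)%N.
Proof. elim: k => [|k IH] //; rewrite evS odE /= IH; lia. Qed.
Lemma size_od a k : size (od a k) = (2 * k).+1.
Proof. by rewrite odE /= size_ev. Qed.

Lemma hp_nil v c w : hp [::] v c w = 0. Proof. by []. Qed.
Lemma hp_ev0 a v c w : hp (ev a 0) v c w = 0. Proof. by []. Qed.
Lemma hp_evS a k v c w : hp (ev a k.+1) v c w = (c == ~~ a)%:R * sh (od a k) v w.
Proof. by []. Qed.
Lemma hp_od a k v c w : hp (od a k) v c w = (c == a)%:R * sh (ev a k) v w.
Proof. by []. Qed.
Lemma vp_ev0 a u c w : vp u (ev a 0) c w = 0. Proof. by []. Qed.
Lemma vp_evS a k u c w :
  vp u (ev a k.+1) c w = (c == ~~ a)%:R * q ^ (bsum u (~~ a)) * sh u (od a k) w.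
Proof. by []. Qed.
Lemma vp_od a k u c w :
  vp u (od a k) c w = (c == a)%:R * q ^ (bsum u a) * sh u (ev a k) w.
Proof. by []. Qed.

Definition conv (n : nat) (f : nat -> nat -> F) : F :=
  \sum_(0 <= k < n.+1) f (n - k)%N k.

Lemma conv_recr n f : conv n.+1 f = conv n (fun i j => f i.+1 j) + f 0%N n.+1.
Proof.
rewrite /conv big_nat_recr //= subnn; congr (_ + _).
by apply: eq_big_nat => k /andP[_ hk]; rewrite subSn.
Qed.

Lemma conv_recl n f : conv n.+1 f = f n.+1 0%N + conv n (fun i j => f i j.+1).
Proof. by rewrite /conv big_nat_recl //= subn0. Qed.

Lemma conv_rev n f : conv n f = conv n (fun i j => f j i).
Proof.
rewrite /conv big_nat_rev /=; apply: eq_big_nat => k /andP[_ hk].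
rewrite add0n subSS subKn //.
Qed.

Lemma conv0 n f : (forall i j, (i + j)%N = n -> f i j = 0) -> conv n f = 0.
Proof.
move=> H; rewrite /conv big_nat_cond big1 // => k /andP[/andP[_ hk] _].
by apply: H; lia.
Qed.

Lemma conv_ext n f g : (forall i j, (i + j)%N = n -> f i j = g i j) -> conv n f = conv n g.
Proof. by move=> H; apply: eq_big_nat => k /andP[_ hk]; apply: H; lia. Qed.

Lemma conv_split n (W : nat -> nat -> F) al be f g :
  (forall i j, W i.+1 j = al * W i j) -> (forall i j, W i j.+1 = be * W i j) ->
  conv n.+1 (fun i j => W i j * ((if i is i'.+1 then f i' j else 0) +
                                 (if j is j'.+1 then g i j' else 0))) =
  al * conv n (fun i j => W i j * f i j) + be * conv n (fun i j => W i j * g i j).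
Proof.
move=> Hl Hr.
have -> : forall h1 h2 : nat -> nat -> F, conv n.+1 (fun i j => W i j * (h1 i j + h2 i j)) =
   conv n.+1 (fun i j => W i j * h1 i j) + conv n.+1 (fun i j => W i j * h2 i j).
  by move=> h1 h2; rewrite /conv -big_split; apply: eq_bigr => k _; rewrite mulrDr.
rewrite conv_recr conv_recl /= !mulr0 addr0 add0r.
rewrite /conv !mulr_sumr; congr (_ + _); apply: eq_bigr => k _.
  by rewrite Hl mulrA.
by rewrite Hr mulrA.
Qed.

Lemma eq_conv n (f g : nat -> nat -> F) : (forall i j, f i j = g i j) -> conv n f = conv n g.
Proof. by move=> H; apply: conv_ext => i j _; apply: H. Qed.

Definition wt (i j : nat) : F := q ^ (j%:Z - i%:Z).

Lemma wtSl i j : wt i.+1 j = q^-1 * wt i j.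
Proof.
rewrite /wt -exprN1 -expfzDr //; congr (_ ^ _); lia.
Qed.
Lemma wtSr i j : wt i j.+1 = q * wt i j.
Proof.
rewrite /wt -[X in X * _]expr1z -expfzDr //; congr (_ ^ _); lia.
Qed.


Ltac expand := do 4 (rewrite ?shE ?hp_ev0 ?hp_evS ?hp_od ?vp_ev0 ?vp_evS ?vp_od ?negbK
   ?bsum_ev ?bsum_od ?bform_aa ?bform_an ?bform_na ?expr0z).

Lemma ptA a i j c d w :
  sh (ev a i) (od a j) (c :: d :: w) =
  (if i is i'.+1 then
     (c == ~~ a)%:R * (d == a)%:R * (sh (ev a i') (od a j) w + q ^+ 2 * sh (od a i') (ev a j) w)
     + (c == a)%:R * (d == ~~ a)%:R * sh (od a i') (ev a j) w else 0) +
  (if j is j'.+1 then (c == a)%:R * (d == ~~ a)%:R * sh (ev a i) (od a j') w else 0).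
Proof.
case: i => [|i]; case: j => [|j]; expand; rewrite -?exprnN -?exprnP /=.
all: field; by [].
Qed.

Lemma ptB a i j c d w :
  sh (od a j) (ev a i) (c :: d :: w) =
  (if i is i'.+1 then
     (c == a)%:R * (d == ~~ a)%:R * sh (ev a j) (od a i') w
     + (c == ~~ a)%:R * (d == a)%:R * (q ^+ 2)^-1 * (sh (ev a j) (od a i') w + q ^+ 2 * sh (od a j) (ev a i') w) else 0) +
  (if j is j'.+1 then (c == a)%:R * (d == ~~ a)%:R * sh (od a j') (ev a i) w else 0).
Proof.
case: i => [|i]; case: j => [|j]; expand; rewrite -?exprnN -?exprnP /=.
all: field; by [].
Qed.

Lemma ptA' a i j c d w :
  sh (ev (~~ a) i) (od a j) (c :: d :: w) =
  (if i is i'.+1 then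
     (c == a)%:R * ((d == ~~ a)%:R * sh (ev (~~ a) i') (od a j) w
        + (d == a)%:R * ((q ^+ 2)^-1 + 1) * sh (od (~~ a) i') (ev a j) w) else 0) +
  (if j is j'.+1 then (c == a)%:R * (d == ~~ a)%:R * sh (ev (~~ a) i) (od a j') w else 0).
Proof.
case: i => [|i]; case: j => [|j]; expand; rewrite -?exprnN -?exprnP /=.
all: field; by [].
Qed.

Lemma ptB' a i j c d w :
  sh (od a j) (ev (~~ a) i) (c :: d :: w) =
  (if i is i'.+1 then
     (c == a)%:R * ((1 + q ^+ 2) * (d == a)%:R * sh (ev a j) (od (~~ a) i') w
        + (d == ~~ a)%:R * sh (od a j) (ev (~~ a) i') w) else 0) +
  (if j is j'.+1 then (c == a)%:R * (d == ~~ a)%:R * sh (od a j') (ev (~~ a) i) w else 0).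
Proof.
case: i => [|i]; case: j => [|j]; expand; rewrite -?exprnN -?exprnP /=.
all: field; by [].
Qed.



Definition SA a n w := conv n (fun i j => wt i j * sh (ev a i) (od a j) w).
Definition SB a n w := conv n (fun i j => wt j i * sh (od a j) (ev a i) w).
Definition SA' a n w := conv n (fun i j => wt j i * sh (ev (~~ a) i) (od a j) w).
Definition SB' a n w := conv n (fun i j => wt i j * sh (od a j) (ev (~~ a) i) w).

Ltac lincomb := rewrite /conv ?mulrDr ?mulr_sumr -?big_split /=; apply: eq_bigr => k _; field; by [].

Lemma SB_rev a n w : SB a n w = conv n (fun i j => wt i j * sh (od a i) (ev a j) w).
Proof. by rewrite /SB conv_rev. Qed.
Lemma SA_rev a n w : SA a n w = conv n (fun i j => wt j i * sh (ev a j) (od a i) w).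
Proof. by rewrite /SA conv_rev. Qed.
Lemma SB'_rev a n w : SB' (~~ a) n w = conv n (fun i j => wt j i * sh (od (~~ a) i) (ev a j) w).
Proof. by rewrite /SB' conv_rev negbK. Qed.
Lemma SA'_rev a n w : SA' (~~ a) n w = conv n (fun i j => wt i j * sh (ev a j) (od (~~ a) i) w).
Proof. by rewrite /SA' conv_rev negbK. Qed.

Lemma recA a n c d w :
  SA a n.+1 (c :: d :: w) =
  (c == ~~ a)%:R * (d == a)%:R * (q^-1 * SA a n w + q * SB a n w) +
  (c == a)%:R * (d == ~~ a)%:R * (q^-1 * SB a n w + q * SA a n w).
Proof.
rewrite /SA -/(conv _ _).
under eq_conv => i j do rewrite ptA.
rewrite (conv_split _ _ _ _ _ _ (@wtSl) (@wtSr)).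
rewrite SB_rev /SA.
lincomb.
Qed.

Lemma recB a n c d w :
  SB a n.+1 (c :: d :: w) =
  (c == ~~ a)%:R * (d == a)%:R * (q^-1 * SA a n w + q * SB a n w) +
  (c == a)%:R * (d == ~~ a)%:R * (q^-1 * SB a n w + q * SA a n w).
Proof.
rewrite /SB -/(conv _ _).
under eq_conv => i j do rewrite ptB.
rewrite (conv_split _ _ _ _ _ _ (fun i j => wtSr j i) (fun i j => wtSl j i)).
rewrite SA_rev /SB.
lincomb.
Qed.

Lemma recA' a n c d w :
  SA' a n.+1 (c :: d :: w) =
  (c == a)%:R * (d == ~~ a)%:R * (q + q^-1) * SA' a n w +
  (c == a)%:R * (d == a)%:R * (q + q^-1) * SB' (~~ a) n w.
Proof.
rewrite /SA' -/(conv _ _).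
under eq_conv => i j do rewrite ptA'.
rewrite (conv_split _ _ _ _ _ _ (fun i j => wtSr j i) (fun i j => wtSl j i)).
rewrite SB'_rev /SA'.
lincomb.
Qed.

Lemma recB' a n c d w :
  SB' a n.+1 (c :: d :: w) =
  (c == a)%:R * (d == ~~ a)%:R * (q + q^-1) * SB' a n w +
  (c == a)%:R * (d == a)%:R * (q + q^-1) * SA' (~~ a) n w.
Proof.
rewrite /SB' -/(conv _ _).
under eq_conv => i j do rewrite ptB'.
rewrite (conv_split _ _ _ _ _ _ (@wtSl) (@wtSr)).
rewrite SA'_rev /SB'.
lincomb.
Qed.


Lemma vcat_cons p (A B : V F) :
  vcat (p :: A) B = [seq (p.1 * r.1, p.2 ++ r.2) | r <- B] ++ vcat A B.
Proof. by []. Qed.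

Lemma vcat_cat (A B C : V F) : vcat (A ++ B) C = vcat A C ++ vcat B C.
Proof. by rewrite /vcat map_cat flatten_cat. Qed.

Lemma vcat_map (p : F * word) (B C : V F) :
  vcat [seq (p.1 * r.1, p.2 ++ r.2) | r <- B] C =
  [seq (p.1 * r.1, p.2 ++ r.2) | r <- vcat B C].
Proof.
rewrite /vcat map_flatten -!map_comp; congr flatten; apply: eq_map => r /=.
rewrite -map_comp; apply: eq_map => s /=; by rewrite mulrA catA.
Qed.

Lemma vcat_assoc (A B C : V F) : vcat (vcat A B) C = vcat A (vcat B C).
Proof.
elim: A => [|p A IH] //.
by rewrite !vcat_cons vcat_cat IH vcat_map.
Qed.

Definition cxy (Z : V F) (w : word) : F :=
  match w with c :: d :: w' => (c != d)%:R * coef Z w' | _ => 0 end.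

Lemma coef_vcat_xyyx (Z : V F) w : coef (vcat (xyyx F) Z) w = cxy Z w.
Proof.
rewrite /vcat /= cats0 coef_cat.
case: w => [|c [|d w]] /=.
- by rewrite !coef_mapc_nil addr0.
- by rewrite !coef_mapc !coef_mapc_nil !mulr0 addr0.
rewrite !coef_mapc !coef_map_id1 !mulrA -mulrDl; congr (_ * _).
by rewrite /lx /ly; case: c; case: d; rewrite /= ?mulr1 ?mulr0 ?addr0 ?add0r.
Qed.

Definition ca (a : bool) (Z : V F) (w : word) : F :=
  match w with c :: w' => (c == a)%:R * coef Z w' | _ => 0 end.

Lemma coef_vcat_a a (Z : V F) w : coef (vcat (vword F [:: a]) Z) w = ca a Z w.
Proof.
rewrite /vcat /= cats0; case: w => [|c w] /=.
  by rewrite coef_mapc_nil.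
by rewrite coef_mapc coef_map_id1.
Qed.

Definition R1 a n w := coef (vcat (vpow (xyyx F) n) (vword F [:: a])) w.
Definition R2 a n w := coef (vcat (vword F [:: a]) (vpow (xyyx F) n)) w.

Lemma R1S a n w : R1 a n.+1 w = cxy (vcat (vpow (xyyx F) n) (vword F [:: a])) w.
Proof. by rewrite /R1 /= vcat_assoc coef_vcat_xyyx. Qed.

Lemma R10 a w : R1 a 0 w = ([:: a] == w)%:R.
Proof. by rewrite /R1 /vcat /= /coef big_cons big_nil mulr1 addr0; case: ifP. Qed.

Lemma R20 a w : R2 a 0 w = ([:: a] == w)%:R.
Proof. by rewrite /R2 /vcat /= /coef big_cons big_nil mulr1 addr0; case: ifP. Qed.

Lemma R2E a n w : R2 a n w = ca a (vpow (xyyx F) n) w.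
Proof. by rewrite /R2 coef_vcat_a. Qed.

Lemma vpowS n w : coef (vpow (xyyx F) n.+1) w = cxy (vpow (xyyx F) n) w.
Proof. by rewrite /= coef_vcat_xyyx. Qed.

Let cc := q + q^-1.

Lemma L14 n : forall a w, SA a n w = cc ^+ n * R1 a n w /\ SB a n w = cc ^+ n * R1 a n w.
Proof.
elim: n => [|n IH] a w.
  rewrite /SA /SB /conv !big_nat1 /wt subrr expr0z !mul1r R10 !odE !ev0.
  by rewrite ?subnn ?ev0 ?sh_nil_l ?sh_nil_r; split.
case: w => [|c [|d w]].
- rewrite R1S /= mulr0; split; (rewrite /SA /SB conv0 // => i j hij; rewrite sh_size ?mulr0 // size_ev size_od /=; apply/eqP; lia).
- rewrite R1S /= mulr0; split; (rewrite /SA /SB conv0 // => i j hij; rewrite sh_size ?mulr0 // size_ev size_od /=; apply/eqP; lia).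
rewrite recA recB R1S /= -/(R1 a n w).
case: (IH a w) => -> ->.
rewrite exprS /cc.
by split; case: a; case: c; case: d => /=; ring.
Qed.

Lemma L23 n : forall a w, SA' a n w = cc ^+ n * R2 a n w /\ SB' a n w = cc ^+ n * R2 a n w.
Proof.
elim: n => [|n IH] a w.
  rewrite /SA' /SB' /conv !big_nat1 /wt subrr expr0z !mul1r R20 !odE !ev0.
  by rewrite ?subnn ?ev0 ?sh_nil_l ?sh_nil_r; split.
case: w => [|c [|d w]].
- rewrite R2E /= mulr0; split; (rewrite /SA' /SB' conv0 // => i j hij; rewrite sh_size ?mulr0 // size_ev size_od /=; apply/eqP; lia).
- rewrite R2E /= vpowS /= mulr0 mulr0; split; (rewrite /SA' /SB' conv0 // => i j hij; rewrite sh_size ?mulr0 // size_ev size_od /=; apply/eqP; lia).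
rewrite recA' recB' R2E /= vpowS.
case: (IH a w) => -> ->; case: (IH (~~ a) w) => -> ->.
rewrite !R2E exprS /cc.
case: w => [|e w] /=; first by rewrite !mulr0 !addr0.
by split; case: a; case: c; case: d; case: e => /=; ring.
Qed.


Lemma coef_vsum n (f : nat -> V F) w : coef (vsum n f) w = \sum_(0 <= k < n.+1) coef (f k) w.
Proof. by rewrite /coef /vsum big_flatten big_map /index_iota subn0. Qed.

Lemma coef_star u v w : coef (star q (vword F u) (vword F v)) w = sh u v w.
Proof. by rewrite /star /= !cats0 coef_scale mul1r mul1r. Qed.

Lemma sumE n (E : nat -> int) (U W : nat -> word) w :
  coef (vsum n (fun k => vscale (q ^ E k) (star q (vword F (U k)) (vword F (W k))))) w =
  \sum_(0 <= k < n.+1) q ^ E k * sh (U k) (W k) w.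
Proof. by rewrite coef_vsum; apply: eq_bigr => k _; rewrite coef_scale coef_star. Qed.

Lemma to_SA a n w :
  \sum_(0 <= k < n.+1) q ^ ((2 * k)%:Z - n%:Z) * sh (ev a (n - k)) (od a k) w = SA a n w.
Proof.
apply: eq_big_nat => k /andP[_ hk]; rewrite /wt; congr (q ^ _ * _); lia.
Qed.
Lemma to_SB a n w :
  \sum_(0 <= k < n.+1) q ^ (n%:Z - (2 * k)%:Z) * sh (od a k) (ev a (n - k)) w = SB a n w.
Proof.
apply: eq_big_nat => k /andP[_ hk]; rewrite /wt; congr (q ^ _ * _); lia.
Qed.
Lemma to_SA' a n w :
  \sum_(0 <= k < n.+1) q ^ (n%:Z - (2 * k)%:Z) * sh (ev (~~ a) (n - k)) (od a k) w = SA' a n w.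
Proof.
apply: eq_big_nat => k /andP[_ hk]; rewrite /wt; congr (q ^ _ * _); lia.
Qed.
Lemma to_SB' a n w :
  \sum_(0 <= k < n.+1) q ^ ((2 * k)%:Z - n%:Z) * sh (od a k) (ev (~~ a) (n - k)) w = SB' a n w.
Proof.
apply: eq_big_nat => k /andP[_ hk]; rewrite /wt; congr (q ^ _ * _); lia.
Qed.

End Aux.

Lemma Gw_ev m : Gw m = ev lx m.
Proof. by elim: m => [|m IH] //; rewrite evS odE -IH. Qed.
Lemma Gtw_ev m : Gtw m = ev ly m.
Proof. by elim: m => [|m IH] //; rewrite evS odE -IH. Qed.
Lemma Gw_ev' m : Gw m = ev (~~ ly) m. Proof. exact: Gw_ev. Qed.
Lemma Gtw_ev' m : Gtw m = ev (~~ lx) m. Proof. exact: Gtw_ev. Qed.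
Lemma Wneg_od k : Wneg k = od lx k.
Proof. by rewrite /Wneg -/(Gw k) Gw_ev. Qed.
Lemma Wpos_od k : Wpos k = od ly k.
Proof. by rewrite /Wpos -/(Gtw k) Gtw_ev. Qed.


Theorem proposition12p5 (F : fieldType) (q : F)
  (hq0 : q != 0) (hq : forall m : nat, (0 < m)%N -> q ^+ m != 1) (n : nat) :
  let e1 k := q ^ ((2 * k)%:Z - n%:Z) in   (* q^{2k-n} *)
  let e2 k := q ^ (n%:Z - (2 * k)%:Z) in   (* q^{n-2k} *)
  let c := qint q 2 ^+ n in                (* [2]_q^n *)
  let P := vpow (xyyx F) n in              (* (xy+yx)^n *)
  (* first line *)
  veq (vsum n (fun k => vscale (e1 k) (star q (vword F (Gw (n - k))) (vword F (Wneg k)))))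
      (vsum n (fun k => vscale (e2 k) (star q (vword F (Wneg k)) (vword F (Gw (n - k)))))) /\
  veq (vsum n (fun k => vscale (e2 k) (star q (vword F (Wneg k)) (vword F (Gw (n - k))))))
      (vscale c (vcat P (vword F [:: lx]))) /\
  (* second line *)
  veq (vsum n (fun k => vscale (e2 k) (star q (vword F (Gw (n - k))) (vword F (Wpos k)))))
      (vsum n (fun k => vscale (e1 k) (star q (vword F (Wpos k)) (vword F (Gw (n - k)))))) /\
  veq (vsum n (fun k => vscale (e1 k) (star q (vword F (Wpos k)) (vword F (Gw (n - k))))))
      (vscale c (vcat (vword F [:: ly]) P)) /\
  (* third line *)
  veq (vsum n (fun k => vscale (e2 k) (star q (vword F (Gtw (n - k))) (vword F (Wneg k)))))
      (vsum n (fun k => vscale (e1 k) (star q (vword F (Wneg k)) (vword F (Gtw (n - k)))))) /\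
  veq (vsum n (fun k => vscale (e1 k) (star q (vword F (Wneg k)) (vword F (Gtw (n - k))))))
      (vscale c (vcat (vword F [:: lx]) P)) /\
  (* fourth line *)
  veq (vsum n (fun k => vscale (e1 k) (star q (vword F (Gtw (n - k))) (vword F (Wpos k)))))
      (vsum n (fun k => vscale (e2 k) (star q (vword F (Wpos k)) (vword F (Gtw (n - k)))))) /\
  veq (vsum n (fun k => vscale (e2 k) (star q (vword F (Wpos k)) (vword F (Gtw (n - k))))))
      (vscale c (vcat P (vword F [:: ly]))).
Proof.
move=> e1 e2 c P.
have hc : qint q 2 = q + q^-1.
  have h2 := hq 2%N isT.
  have hqq : q - q^-1 != 0.
    apply: contra h2 => /eqP h; apply/eqP.
    have : q * (q - q^-1) == 0 by rewrite h mulr0.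
    by rewrite mulrBr mulfV // subr_eq0 expr2 => /eqP.
  rewrite /qint -exprnN -exprnP; field.
  by rewrite hq0 /= subr_eq0 -expr2.
have Ec : c = (q + q^-1) ^+ n by rewrite /c hc.
rewrite /e1 /e2 /P Ec.
have L1 := @L14 F q hq0 n; have L2 := @L23 F q hq0 n.
split; [|split; [|split; [|split; [|split; [|split; [|split]]]]]] => w; rewrite !sumE ?coef_scale.
- under eq_bigr => k _ do rewrite Gw_ev Wneg_od.
  under [in RHS]eq_bigr => k _ do rewrite Gw_ev Wneg_od.
  rewrite to_SA // to_SB //; case: (L1 lx w) => -> -> //.
- under eq_bigr => k _ do rewrite Gw_ev Wneg_od.
  rewrite to_SB //; case: (L1 lx w) => _ -> //.
- under eq_bigr => k _ do rewrite Gw_ev' Wpos_od.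
  under [in RHS]eq_bigr => k _ do rewrite Gw_ev' Wpos_od.
  rewrite to_SA' // to_SB' //; case: (L2 ly w) => -> -> //.
- under eq_bigr => k _ do rewrite Gw_ev' Wpos_od.
  rewrite to_SB' //; case: (L2 ly w) => _ -> //.
- under eq_bigr => k _ do rewrite Gtw_ev' Wneg_od.
  under [in RHS]eq_bigr => k _ do rewrite Gtw_ev' Wneg_od.
  rewrite to_SA' // to_SB' //; case: (L2 lx w) => -> -> //.
- under eq_bigr => k _ do rewrite Gtw_ev' Wneg_od.
  rewrite to_SB' //; case: (L2 lx w) => _ -> //.
- under eq_bigr => k _ do rewrite Gtw_ev Wpos_od.
  under [in RHS]eq_bigr => k _ do rewrite Gtw_ev Wpos_od.
  rewrite to_SA // to_SB //; case: (L1 ly w) => -> -> //.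
- under eq_bigr => k _ do rewrite Gtw_ev Wpos_od.
  rewrite to_SB //; case: (L1 ly w) => _ -> //.
Qed.
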